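(* Let $X_1,\dots,X_N$ ($N\ge2$) be independent random variables with finite means. Let $S=\bigcup_{i=1}^N S_i$ be a set of samples where $S_i$ consists of i.i.d. samples of $X_i$, and let $S$ be randomly divided into two subsets $S^A$ and $S^B$, with $S_i^A=S_i\cap S^A$, $S_i^B=S_i\cap S^B$ nonempty. Define the sample averages $\hat\mu_i=\frac{1}{|S_i|}\sum_{s\in S_i}s$, $\hat\mu_i^A=\frac{1}{|S_i^A|}\sum_{s\in S_i^A}s$, $\hat\mu_i^B=\frac{1}{|S_i^B|}\sum_{s\in S_i^B}s$, and the single estimator $\hat\mu^*_{SE}=\max_i\hat\mu_i$. For $1\le K\le N$, let $\mathcal{M}_K$ be the set of indices of the $K$ largest values in $(\hat\mu^B_1,\dots,\hat\mu^B_N)$, and let $a_K^*$ be an index with $\hat\mu^A_{a_K^*}=\max_{i\in\mathcal{M}_K}\hat\mu^A_i$ (ties broken at random). Let $a^*$ be an index with $\hat\mu^A_{a^*}=\max_i\hat\mu^A_i$, and define the clipped double estimator $\hat\mu^*_{CDE}=\min\{\hat\mu^B_{a^*},\hat\mu^*_{SE}\}$. Assume that the values in $(\hat\mu^A_i)_i$ and in $(\hat\mu^B_i)_i$ are different. Then for $1\le K<N$, $$\mathbb{E}\left[\min\{\hat\mu^B_{a_K^*},\hat\mu^*_{SE}\}\right]\ \ge\ \mathbb{E}\left[\min\{\hat\mu^B_{a_{K+1}^*},\hat\mu^*_{SE}\}\right],$$ where the inequality is strict if and only if $P(\hat\mu^*_{SE}>\hat\mu^B_{a_K^*}>\hat\mu^B_{a_{K+1}^*})>0$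 or $P(\hat\mu^B_{a_K^*}\ge\hat\mu^*_{SE}>\hat\mu^B_{a_{K+1}^*})>0$. Moreover, for all $1\le K\le N$, $\mathbb{E}\left[\min\{\hat\mu^B_{a_K^*},\hat\mu^*_{SE}\}\right]\ge\mathbb{E}\left[\hat\mu^*_{CDE}\right]$.
   Context: The quantity $\min\{\hat\mu^B_{a_K^*},\hat\mu^*_{SE}\}$ is called the action candidate based clipped double estimator of $\max_i\mathbb{E}[X_i]$; $\mathcal{M}_K$ is the set of ''action candidates''. *)

(* Defs.v *)
From HB Require Import structures.
From mathcomp Require Import all_boot all_order all_algebra.
From mathcomp Require Import all_classical all_reals all_analysis.
Set Implicit Arguments. Unset Strict Implicit. Unset Printing Implicit Defensive.
Import Order.TTheory GRing.Theory Num.Theory.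
Local Open Scope classical_set_scope.
Local Open Scope ring_scope.

Section defs.
Context {d : measure_display} {T : measurableType d} {R : realType}.

Definition mutually_independent (P : probability T R) (K : eqType)
    (D : set K) (X : K -> T -> R) : Prop :=
  forall (J : seq K) (B : K -> set R),
    uniq J -> (forall k, k \in J -> D k) -> (forall k, measurable (B k)) ->
    P (\bigcap_(k in [set` J]) (X k @^-1` B k)) =
    (\prod_(k <- J) P (X k @^-1` B k))%E.

Definition same_distribution (P : probability T R) (X Y : T -> R) : Prop :=
  forall B : set R, measurable B -> P (X @^-1` B) = P (Y @^-1` B).

End defs.

Definition sample_avg {R : realType} (n : nat) (sel : nat -> bool)
    (y : nat -> R) : R :=
  (\sum_(j < n | sel j) y j) / (#|[set j : 'I_n | sel j]|%:R).

Definition maxR {R : realType} (N : nat) (f : 'I_N -> R) : R :=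
  fine (\big[Order.max/-oo%E]_(i < N) (f i)%:E).

(* M_K : the set of indices of the K largest values of f, i.e. those indices
   i for which fewer than K indices carry a strictly larger value. *)
Definition topK {R : realType} (N : nat) (f : 'I_N -> R) (K : nat) : {set 'I_N} :=
  [set i | (#|[set j | (f i < f j)%R]| < K)%N].

Definition is_argmax_in {R : realType} (N : nat) (M : {set 'I_N}) (g : 'I_N -> R)
    (a : 'I_N) : Prop :=
  a \in M /\ (forall i, i \in M -> g i <= g a).

(* Main.v *)
Require Import Defs.
From HB Require Import structures.
From mathcomp Require Import all_boot all_order all_algebra.
From mathcomp Require Import all_classical all_reals all_analysis.
From mathcomp Require Import measurable_realfun.
From mathcomp Require Import lra.
Import Order.TTheory GRing.Theory Num.Theory.
Local Open Scope classical_set_scope.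
Local Open Scope ring_scope.

Section helpers.
Context {d : measure_display} {T : measurableType d} {R : realType}.

Lemma msum (I : Type) (s : seq I) (Q : pred I) (h : I -> T -> R) :
  (forall i, measurable_fun setT (h i)) ->
  measurable_fun setT (fun w => \sum_(i <- s | Q i) h i w).
Proof.
move=> mh; elim: s => [|i s IH].
  by under eq_fun do rewrite big_nil; exact: measurable_cst.
under eq_fun do rewrite big_cons.
case: (Q i) => //; exact: measurable_funD.
Qed.

Lemma mband (I : Type) (s : seq I) (h : I -> T -> bool) :
  (forall i, measurable_fun setT (h i)) ->
  measurable_fun setT (fun w => \big[andb/true]_(i <- s) h i w).
Proof.
move=> mh; elim: s => [|i s IH].
  by under eq_fun do rewrite big_nil; exact: measurable_cst.
under eq_fun do rewrite big_cons.
exact: measurable_and.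
Qed.

Lemma mffuneq (I : finType) (b : I -> T -> bool) (c : {ffun I -> bool}) :
  (forall i, measurable_fun setT (b i)) ->
  measurable_fun setT (fun w => [ffun i => b i w] == c).
Proof.
move=> mb.
have -> : (fun w => [ffun i => b i w] == c) =
   (fun w => \big[andb/true]_(i <- index_enum I) (b i w == c i)).
  apply/funext => w; rewrite big_andE; change (([ffun i => b i w] == c) = [forall i, b i w == c i]).
  apply/idP/idP.
    by move/eqP => <-; apply/forallP => i; rewrite ffunE.
  by move/forallP => h; apply/eqP/ffunP => i; rewrite ffunE; exact/eqP.
apply: mband => i; case: (c i).
  by rewrite (_ : (fun w => b i w == true) = b i) //; apply/funext => w; rewrite eqb_id.
rewrite (_ : (fun w => b i w == false) = (fun w => ~~ b i w)).
  exact: measurable_neg.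
by apply/funext => w; rewrite eqbF_neg.
Qed.

Lemma mpattern (I : finType) (b : I -> T -> bool) (F : {ffun I -> bool} -> T -> R) :
  (forall i, measurable_fun setT (b i)) -> (forall c, measurable_fun setT (F c)) ->
  measurable_fun setT (fun w => F [ffun i => b i w] w).
Proof.
move=> mb mF.
have -> : (fun w => F [ffun i => b i w] w) =
   (fun w => \sum_(c : {ffun I -> bool})
      (if [ffun i => b i w] == c then F c w else 0)).
  apply/funext => w; rewrite (bigD1 [ffun i => b i w]) //= eqxx big1 ?addr0 //.
  by move=> c /negPf; rewrite eq_sym => ->.
apply: msum => c; apply: measurable_fun_ifT => //; exact: mffuneq.
Qed.

Lemma mpatternb (I : finType) (b : I -> T -> bool) (F : {ffun I -> bool} -> bool) :
  (forall i, measurable_fun setT (b i)) ->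
  measurable_fun setT (fun w => F [ffun i => b i w]).
Proof.
move=> mb.
have := @mpattern I b (fun c _ => if F c then 1 else 0) mb (fun c => measurable_cst _).
move=> h; have := measurable_fun_eqr h (measurable_cst (1:R)).
apply: eq_measurable_fun => w _ /=; case: (F _) => /=.
  by rewrite eqxx.
by rewrite eq_sym oner_eq0.
Qed.


Lemma msetb (f : T -> bool) : measurable [set w | f w] -> measurable_fun setT f.
Proof.
move=> mf; apply: (measurable_fun_bool true); rewrite setTI.
by rewrite (_ : f @^-1` [set true] = [set w | f w]) //; apply/seteqP; split => w /=.
Qed.

Lemma msample (n : nat) (sel : nat -> T -> bool) (y : nat -> T -> R) :
  (forall j, measurable [set w | sel j w]) -> (forall j, measurable_fun setT (y j)) ->
  measurable_fun setT (fun w => sample_avg n (fun j => sel j w) (fun j => y j w)).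
Proof.
move=> ms my.
pose F (c : {ffun 'I_n -> bool}) (w : T) :=
  (\sum_(j < n | c j) y j w) / (#|[set j : 'I_n | c j]|%:R).
have -> : (fun w => sample_avg n (fun j => sel j w) (fun j => y j w)) =
    (fun w => F [ffun j : 'I_n => sel j w] w).
  apply/funext => w; rewrite /F /sample_avg; congr (_ / _).
    by apply: eq_bigl => j; rewrite ffunE.
  by congr (_%:R); rewrite (_ : [set j : 'I_n | [ffun j0 : 'I_n => sel j0 w] j] = [set j | sel j w]) //; apply/seteqP; split => k /=; rewrite ffunE.
apply: (@mpattern 'I_n (fun (j : 'I_n) w => sel j w) F) => [j|c]; first exact: msetb.
rewrite /F; apply: measurable_funM; first exact: msum.
exact: measurable_cst.
Qed.

Lemma sample_bound (n : nat) (sel : nat -> bool) (y : nat -> R) :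
  `|sample_avg n sel y| <= \sum_(j < n) `|y j|.
Proof.
rewrite /sample_avg; set c := (#|_|%:R : R); set s := \sum_(j < n | _) _.
have sb : `|s| <= \sum_(j < n) `|y j|.
  apply: le_trans (ler_norm_sum _ _ _) _.
  rewrite [leRHS](bigID (fun j : 'I_n => sel j)) /= lerDl.
  by apply: sumr_ge0 => j _.
have [->|c0] := eqVneq c 0.
  by rewrite invr0 mulr0 normr0; apply: sumr_ge0 => j _.
have c1 : 1 <= c.
  rewrite /c; move: c0; rewrite /c pnatr_eq0 ler1n; case: (#|_|) => //.
apply: le_trans sb; rewrite normrM normfV (ger0_norm (le_trans ler01 c1)).
rewrite ler_pdivrMr ?(lt_le_trans ltr01 c1) //.
by rewrite -{1}[`|s|]mulr1 ler_wpM2l.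
Qed.

Lemma maxR_prop (N : nat) (f : 'I_N -> R) : (0 < N)%N ->
  exists i, maxR f = f i /\ (forall j, f j <= maxR f).
Proof.
move=> N0; pose i0 : 'I_N := Ordinal N0.
have E0 := bigmax_eq_arg -oo%E i0 xpredT (fun i => (f i)%:E) erefl (fun i _ => leNye _).
have [a E] : exists a, (\big[Order.max/-oo%E]_(i < N) (f i)%:E)%E = (f a)%:E.
  by eexists; exact: E0.
exists a; split; first by rewrite /maxR E.
move=> j; rewrite /maxR E /= -lee_fin -E.
exact: (le_bigmax -oo%E (fun i => (f i)%:E) j).
Qed.

Lemma mbigmaxe (I : Type) (s : seq I) (Q : pred I) (h : I -> T -> R) :
  (forall i, measurable_fun setT (h i)) ->
  measurable_fun setT (fun w => (\big[Order.max/-oo%E]_(i <- s | Q i) (h i w)%:E)%E).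
Proof.
move=> mh; elim: s => [|i s IH].
  by under eq_fun do rewrite big_nil; exact: measurable_cst.
under eq_fun do rewrite big_cons.
case: (Q i) => //; apply: measurable_maxe => //.
exact/measurable_EFinP.
Qed.

Lemma mmaxR (N : nat) (h : 'I_N -> T -> R) :
  (forall i, measurable_fun setT (h i)) ->
  measurable_fun setT (fun w => maxR (fun i => h i w)).
Proof.
move=> mh; rewrite /maxR.
apply: (measurableT_comp (f := fine)); first exact: fine_measurable.
exact: mbigmaxe.
Qed.

End helpers.

Section helpers2.
Context {d : measure_display} {T : measurableType d} {R : realType}.
Variable P : probability T R.

Lemma int_same (Y X : {RV P >-> R}) : same_distribution P Y X ->
  P.-integrable setT (EFin \o X) -> P.-integrable setT (EFin \o Y).
Proof.
move=> sd /integrableP [_ hX]; apply/integrableP; split.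
  by apply/measurable_EFinP; exact: measurable_funP.
have mab : measurable_fun setT (fun y : R => (`|y|)%:E).
  by apply/measurable_EFinP; exact: normr_measurable.
suff -> : (\int[P]_x `|(EFin \o Y) x|)%E = (\int[P]_x `|(EFin \o X) x|)%E by [].
rewrite /=.
have eY := ge0_integral_distribution Y mab (fun y => normr_ge0 _).
have eX := ge0_integral_distribution X mab (fun y => normr_ge0 _).
rewrite /comp in eX eY *.
rewrite -eY -eX; apply: eq_measure_integral => A mA _.
exact: sd.
Qed.

Lemma intR_sum (I : Type) (s : seq I) (h : I -> T -> R) :
  (forall i, P.-integrable setT (EFin \o h i)) ->
  P.-integrable setT (EFin \o (fun w => \sum_(i <- s) h i w)).
Proof.
move=> ih; elim: s => [|i s IH].
  apply: (eq_integrable measurableT (cst 0%E)); last exact: integrable0.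
  by move=> w _ /=; rewrite big_nil.
apply: (eq_integrable measurableT ((EFin \o h i) \+ (EFin \o fun w => (\sum_(j <- s) h j w)%R))%E); last exact: integrableD.
by move=> w _ /=; rewrite big_cons.
Qed.

Lemma intR_abs (h : T -> R) :
  P.-integrable setT (EFin \o h) -> P.-integrable setT (EFin \o (fun w => `|h w|)).
Proof.
move=> /integrable_abse ih; apply: (eq_integrable measurableT (abse \o (EFin \o h))) => //.
Qed.

Lemma intR_D (f g : T -> R) :
  P.-integrable setT (EFin \o f) -> P.-integrable setT (EFin \o g) ->
  P.-integrable setT (EFin \o (fun w => f w + g w)).
Proof.
move=> hf hg; apply: (eq_integrable measurableT ((EFin \o f) \+ (EFin \o g))%E); last exact: integrableD.
by [].
Qed.

End helpers2.

Section comb.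
Context {R : realType} (N : nat) (A B : 'I_N -> R).
Hypotheses (injA : injective A) (injB : injective B).

Lemma topK_sep K i j : i \in topK B K -> j \notin topK B K -> B j < B i.
Proof.
rewrite !inE -leqNgt => hi hj.
rewrite ltNge; apply/negP => hij.
have ne : i != j by apply: contraTneq hj => <-; rewrite -ltnNge.
have lt : B i < B j by rewrite lt_neqAle hij andbT; apply: contra ne => /eqP /injB ->.
have : (#|[set k | (B j < B k)%R]| <= #|[set k | (B i < B k)%R]|)%N.
  apply: subset_leq_card; apply/fintype.subsetP => k /set_mem /= h.
  by apply/mem_set => /=; exact: lt_trans h.
move=> le; have := leq_trans hj le; by rewrite leqNgt hi.
Qed.

Lemma topK_mono K i : i \in topK B K -> i \in topK B K.+1.
Proof. by rewrite !inE => h; exact: ltnW. Qed.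

Lemma argmax_unique (M : {set 'I_N}) a b :
  is_argmax_in M A a -> is_argmax_in M A b -> a = b.
Proof.
move=> [aM ha] [bM hb]; apply: injA; apply/eqP; rewrite eq_le.
by rewrite hb // ha.
Qed.

Lemma argmax_sub (M M' : {set 'I_N}) a b :
  (forall i, i \in M -> i \in M') ->
  is_argmax_in M A a -> is_argmax_in M' A b -> b \in M -> a = b.
Proof.
move=> sub ha [bM' hb] bM; apply: (@argmax_unique M a b ha); split => // i iM.
exact: hb (sub _ iM).
Qed.

Lemma aK_step K a a' : is_argmax_in (topK B K) A a ->
  is_argmax_in (topK B K.+1) A a' -> B a' <= B a.
Proof.
move=> ha ha'; have [a'K|a'K] := boolP (a' \in topK B K).
  by rewrite (@argmax_sub _ _ a a' (@topK_mono K) ha ha' a'K).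
by apply: ltW; apply: (topK_sep K) => //; case: ha.
Qed.

Lemma aK_eq K a a' : is_argmax_in (topK B K) A a ->
  is_argmax_in (topK B K.+1) A a' -> a' != a -> B a' < B a.
Proof.
move=> ha ha' ne; have [a'K|a'K] := boolP (a' \in topK B K).
  by rewrite (@argmax_sub _ _ a a' (@topK_mono K) ha ha' a'K) eqxx in ne.
by apply: (topK_sep K) => //; case: ha.
Qed.

Lemma astar_le K a s : is_argmax_in (topK B K) A a ->
  is_argmax_in [set: 'I_N] A s -> B s <= B a.
Proof.
move=> ha hs; have [sK|sK] := boolP (s \in topK B K).
  by rewrite (@argmax_sub _ [set: 'I_N] a s (fun i _ => finset.in_setT i) ha hs sK).
by apply: ltW; apply: (topK_sep K) => //; case: ha.
Qed.

End comb.

Section helpers4.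
Context {d : measure_display} {T : measurableType d} {R : realType}.

Lemma mpatternf (I : finType) (b : I -> T -> bool) (G : (I -> bool) -> bool) :
  (forall i, measurable_fun setT (b i)) ->
  measurable_fun setT (fun w => G (fun i => b i w)).
Proof.
move=> mb; have := @mpatternb _ _ _ I b (fun c : {ffun I -> bool} => G (fun i => c i)) mb.
move=> h; have {}h := h R; apply: (eq_measurable_fun _ _ h) => w _ /=.
by congr (G _); apply/funext => i; rewrite ffunE.
Qed.

Lemma mlt {a b : T -> R} : measurable_fun setT a -> measurable_fun setT b ->
  measurable [set w | a w < b w].
Proof.
move=> ma mb; have h : measurable_fun setT (fun w => a w < b w) by exact: measurable_fun_ltr.
have := h measurableT [set true] I.
rewrite setTI; congr measurable; apply/seteqP; split => w /=; by [].
Qed.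

Lemma mle {a b : T -> R} : measurable_fun setT a -> measurable_fun setT b ->
  measurable [set w | a w <= b w].
Proof.
move=> ma mb; have h : measurable_fun setT (fun w => a w <= b w) by exact: measurable_fun_ler.
have := h measurableT [set true] I.
rewrite setTI; congr measurable; apply/seteqP; split => w /=; by [].
Qed.

Lemma mcomp_idx (N : nat) (a : T -> 'I_N) (h : 'I_N -> T -> R) :
  (forall i, measurable_fun setT (fun w => a w == i)) ->
  (forall i, measurable_fun setT (h i)) ->
  measurable_fun setT (fun w => h (a w) w).
Proof.
move=> ma mh.
have -> : (fun w => h (a w) w) =
    (fun w => \sum_(i : 'I_N) (if a w == i then h i w else 0)).
  apply/funext => w; rewrite (bigD1 (a w)) //= eqxx big1 ?addr0 //.
  by move=> i /negPf; rewrite eq_sym => ->.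
apply: msum => i; apply: measurable_fun_ifT => //; exact: measurable_cst.
Qed.

Variable P : probability T R.

Lemma strict_iff (f g : T -> R) :
  P.-integrable setT (EFin \o f) -> P.-integrable setT (EFin \o g) ->
  (forall w, f w <= g w) ->
  ('E_P[f] < 'E_P[g])%E <-> (0 < P [set w | (f w < g w)%R])%E.
Proof.
move=> intf intg fg.
have mf : measurable_fun setT f by apply/measurable_EFinP; case/integrableP: intf.
have mg : measurable_fun setT g by apply/measurable_EFinP; case/integrableP: intg.
have mS := mlt mf mg.
have mh : measurable_fun setT (fun w => g w - f w) by apply: measurable_funB.
rewrite !unlock; split.
  move=> lt; rewrite lt0e measure_ge0 andbT; apply/eqP => P0.
  have : (\int[P]_w (f w)%:E = \int[P]_w (g w)%:E)%E.
    apply: ae_eq_integral => //; try exact/measurable_EFinP.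
    exists [set w | f w < g w]; split => // w /= h; rewrite lt_neqAle fg andbT.
    by apply/negP => /eqP e; apply: h => _; rewrite e.
  by move=> e; rewrite e ltxx in lt.
move=> Pgt; rewrite lt_neqAle le_integral // ?andbT; last by move=> w _; rewrite lee_fin.
apply/negP => /eqP e.
have i0 : (\int[P]_w `|(EFin \o (fun w => (g w - f w)%R)) w| = 0)%E.
  rewrite (eq_integral (fun w => ((g w)%:E - (f w)%:E)%E)); last first.
    by move=> w _ /=; rewrite ger0_norm // subr_ge0.
  rewrite integralB_EFin // e subee //; exact: integrable_fin_num.
have := (ae_eq_integral_abs P measurableT (f := EFin \o (fun w => g w - f w))).
have mh' : measurable_fun setT (EFin \o (fun w => g w - f w)) by exact/measurable_EFinP.
move=> /(_ mh') [] /(_ i0) [Nn [mN PN sub]] _.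
have : P [set w | f w < g w] = 0%E.
  apply: (subset_measure0 _ _ _ PN) => // w /= fgw; apply: sub => /=.
  move/(_ I) => /= /eqP; rewrite eqe subr_eq0 => /eqP gf.
  by move: fgw; rewrite gf ltxx.
by move=> P0; rewrite P0 ltxx in Pgt.
Qed.

End helpers4.

Lemma minr_mono (R : realType) (x1 x0 s : R) : x1 <= x0 -> Num.min x1 s <= Num.min x0 s.
Proof.
move=> h; rewrite /Order.min.
have [h1|h1] := ltP x1 s; have [h2|h2] := ltP x0 s; lra.
Qed.

Lemma minr_lt_iff (R : realType) (x1 x0 s : R) : x1 <= x0 ->
  (Num.min x1 s < Num.min x0 s) <-> ((x0 < s /\ x1 < x0) \/ (s <= x0 /\ x1 < s)).
Proof.
move=> h; rewrite /Order.min.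
have [h1|h1] := ltP x1 s; have [h2|h2] := ltP x0 s; split; lra.
Qed.

Lemma pos_union (d : measure_display) (T : measurableType d) (R : realType)
  (P : probability T R) (A B : set T) : measurable A -> measurable B ->
  (0 < P (A `|` B))%E <-> (0 < P A)%E \/ (0 < P B)%E.
Proof.
move=> mA mB; split.
  move=> Pgt.
  case: (ltP 0%E (P A)) => [h|h1]; first by left.
  case: (ltP 0%E (P B)) => [h|h2]; first by right.
  have hU := measureU2 P mA mB.
  have := le_trans hU (leeD h1 h2); rewrite adde0 => h0.
  by rewrite ltNge h0 in Pgt.
case=> h; apply: (lt_le_trans h); (apply: le_measure; [rewrite inE // | rewrite inE; exact: measurableU | ]).
  exact: subsetUl.
exact: subsetUr.
Qed.

Lemma main_abs (d : measure_display) (T : measurableType d) (R : realType)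
    (P : probability T R) (N : nat) (muA muB mu : 'I_N -> T -> R) (G : T -> R)
    (aK : nat -> T -> 'I_N) (astar : T -> 'I_N) :
  (0 < N)%N ->
  (forall i, measurable_fun setT (muA i)) -> (forall i, measurable_fun setT (muB i)) ->
  (forall i, measurable_fun setT (mu i)) ->
  P.-integrable setT (EFin \o G) ->
  (forall i w, `|muB i w| <= G w) -> (forall i w, `|mu i w| <= G w) ->
  let SE w := maxR (fun i => mu i w) in
  (forall w, injective (fun i => muA i w)) ->
  (forall w, injective (fun i => muB i w)) ->
  (forall K w, (1 <= K <= N)%N ->
     is_argmax_in (topK (fun i => muB i w) K) (fun i => muA i w) (aK K w)) ->
  (forall w, is_argmax_in [set: 'I_N] (fun i => muA i w) (astar w)) ->
  let ACDE K w := Num.min (muB (aK K w) w) (SE w) in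
  let CDE w := Num.min (muB (astar w) w) (SE w) in
  (forall K, (1 <= K < N)%N ->
     ('E_P[ACDE K.+1] <= 'E_P[ACDE K])%E /\
     (('E_P[ACDE K.+1] < 'E_P[ACDE K])%E <->
        (0 < P [set w | (SE w > muB (aK K w) w)%R /\ (muB (aK K w) w > muB (aK K.+1 w) w)%R])%E
        \/
        (0 < P [set w | (muB (aK K w) w >= SE w)%R /\ (SE w > muB (aK K.+1 w) w)%R])%E)) /\
  (forall K, (1 <= K <= N)%N -> ('E_P[CDE] <= 'E_P[ACDE K])%E).
Proof.
move=> N0 mA mB mM iG bB bM SE injA injB hK hS ACDE CDE.
have mSE : measurable_fun setT SE by apply: mmaxR.
have bSE w : `|SE w| <= G w.
  rewrite /SE; by have [i [-> _]] := @maxR_prop _ N (fun i => mu i w) N0; exact: bM.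
pose b (p : bool * ('I_N * 'I_N)) (w : T) :=
  if p.1 then muB p.2.1 w < muB p.2.2 w else muA p.2.1 w < muA p.2.2 w.
have mb p : measurable_fun setT (b p).
  by case: p => -[] [i j] /=; exact: measurable_fun_ltr.
have maK K i : (1 <= K <= N)%N -> measurable_fun setT (fun w => aK K w == i).
  move=> hKN.
  have := @mpatternf _ _ R _ b (fun f => (#|[set j | f (true,(i,j))]| < K)%N &&
     [forall k, (#|[set j | f (true,(k,j))]| < K)%N ==> ~~ f (false,(i,k))]) mb.
  move=> h; apply: (eq_measurable_fun _ _ h) => w _ /=.
  apply/idP/eqP.
    move=> /andP[h1 /forallP h2]; apply: (@argmax_unique _ _ _ (injA w) _ _ _ (hK K w hKN)).
    split; first by rewrite inE.
    move=> k; rewrite inE => hk; have := implyP (h2 k) hk; by rewrite -leNgt.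
  move=> <-; have [h1 h2] := hK K w hKN; apply/andP; split; first by move: h1; rewrite inE.
  apply/forallP => k; apply/implyP => hk; rewrite -leNgt; apply: h2; by rewrite inE.
have mas i : measurable_fun setT (fun w => astar w == i).
  have := @mpatternf _ _ R _ b (fun f => [forall k, ~~ f (false,(i,k))]) mb.
  move=> h; apply: (eq_measurable_fun _ _ h) => w _ /=.
  apply/idP/eqP.
    move=> /forallP h2; apply: (@argmax_unique _ _ _ (injA w) _ _ _ (hS w)).
    split; first by rewrite finset.in_setT.
    move=> k _; have := h2 k; by rewrite -leNgt.
  move=> <-; have [h1 h2] := hS w.
  apply/forallP => k; rewrite -leNgt; apply: h2; by rewrite finset.in_setT.
have gen (a : T -> 'I_N) : (forall i, measurable_fun setT (fun w => a w == i)) ->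
    measurable_fun setT (fun w => muB (a w) w) /\
    P.-integrable setT (EFin \o (fun w => Num.min (muB (a w) w) (SE w))).
  move=> ma; have mF : measurable_fun setT (fun w => muB (a w) w) by apply: mcomp_idx.
  split => //.
  apply: (le_integrable measurableT (f := EFin \o (fun w => Num.min (muB (a w) w) (SE w)))
     (g := EFin \o (fun w => G w + G w))).
  - by apply/measurable_EFinP; exact: measurable_minr.
  - move=> w _ /=; rewrite lee_fin; apply: le_trans (ler_norm _).
    apply: (@le_trans _ _ (`|muB (a w) w| + `|SE w|)); last exact: lerD.
    by rewrite /Order.min; case: ifP => _; [rewrite lerDl | rewrite lerDr].
  - exact: intR_D.
have hA K : (1 <= K <= N)%N -> measurable_fun setT (fun w => muB (aK K w) w) /\
    P.-integrable setT (EFin \o ACDE K).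
  by move=> hKN; exact: (gen _ (fun i => maK K i hKN)).
have hC : P.-integrable setT (EFin \o CDE) := (gen astar mas).2.
split.
  move=> K /andP[K1 KN].
  have hK0 : (1 <= K <= N)%N by rewrite K1 ltnW.
  have hK1 : (1 <= K.+1 <= N)%N by rewrite KN.
  have [mF0 i0] := hA K hK0; have [mF1 i1] := hA K.+1 hK1.
  have step w : muB (aK K.+1 w) w <= muB (aK K w) w.
    exact: (@aK_step _ _ _ _ (injA w) (injB w) K _ _ (hK K w hK0) (hK K.+1 w hK1)).
  have le w : ACDE K.+1 w <= ACDE K w by apply: minr_mono.
  split.
    by rewrite !unlock; apply: le_integral => // w _; rewrite lee_fin.
  apply: iff_trans (@strict_iff _ _ _ P _ _ i1 i0 le) _.
  have mS1 : measurable [set w | (SE w > muB (aK K w) w)%R /\ (muB (aK K w) w > muB (aK K.+1 w) w)%R].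
    exact: measurableI (mlt mF0 mSE) (mlt mF1 mF0).
  have mS2 : measurable [set w | (muB (aK K w) w >= SE w)%R /\ (SE w > muB (aK K.+1 w) w)%R].
    exact: measurableI (mle mSE mF0) (mlt mF1 mSE).
  have -> : [set w | ACDE K.+1 w < ACDE K w] =
      [set w | (SE w > muB (aK K w) w)%R /\ (muB (aK K w) w > muB (aK K.+1 w) w)%R] `|`
      [set w | (muB (aK K w) w >= SE w)%R /\ (SE w > muB (aK K.+1 w) w)%R].
    apply/seteqP; split => w /=.
      by move/(minr_lt_iff _ _ _ (SE w) (step w)).
    by move=> h; apply/(minr_lt_iff _ _ _ (SE w) (step w)).
  exact: pos_union.
move=> K hKN; have [_ iK] := hA K hKN.
rewrite !unlock; apply: le_integral => // w _; rewrite lee_fin; apply: minr_mono.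
exact: (@astar_le _ _ _ _ (injA w) (injB w) K _ _ (hK K w hKN) (hS w)).
Qed.

Theorem theorem1 (d : measure_display) (T : measurableType d) (R : realType)
    (P : probability T R) (N : nat) (n : 'I_N -> nat)
    (X : 'I_N -> {RV P >-> R}) (Y : 'I_N -> nat -> {RV P >-> R})
    (inA : 'I_N -> nat -> T -> bool)
    (aK : nat -> T -> 'I_N) (astar : T -> 'I_N) :
  (2 <= N)%N ->
  (* X_1, ..., X_N independent with finite means *)
  mutually_independent P setT (fun i => (X i : T -> R)) ->
  (forall i, P.-integrable setT (EFin \o X i)) ->
  (* S_i = {Y i j | j < n i} are i.i.d. samples of X_i (all samples independent) *)
  mutually_independent P [set p | (p.2 < n p.1)%N] (fun p => (Y p.1 p.2 : T -> R)) ->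
  (forall i j, (j < n i)%N -> same_distribution P (Y i j) (X i)) ->
  (* random division of S into S^A and S^B, with S_i^A, S_i^B nonempty *)
  (forall i j, measurable [set w | inA i j w]) ->
  (forall i w, exists j, (j < n i)%N /\ inA i j w) ->
  (forall i w, exists j, (j < n i)%N /\ ~~ inA i j w) ->
  let mu i w := sample_avg (n i) predT (fun j => Y i j w) in
  let muA i w := sample_avg (n i) (fun j => inA i j w) (fun j => Y i j w) in
  let muB i w := sample_avg (n i) (fun j => ~~ inA i j w) (fun j => Y i j w) in
  let SE w := maxR (fun i => mu i w) in
  (* the values of (muA i)_i, resp. (muB i)_i, are pairwise different *)
  (forall w, injective (fun i => muA i w)) ->
  (forall w, injective (fun i => muB i w)) ->
  (* a_K^* maximizes muA over M_K, a^* maximizes muA over all indices *)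
  (forall K w, (1 <= K <= N)%N ->
     is_argmax_in (topK (fun i => muB i w) K) (fun i => muA i w) (aK K w)) ->
  (forall w, is_argmax_in [set: 'I_N] (fun i => muA i w) (astar w)) ->
  let ACDE K w := Num.min (muB (aK K w) w) (SE w) in
  let CDE w := Num.min (muB (astar w) w) (SE w) in
  (forall K, (1 <= K < N)%N ->
     ('E_P[ACDE K.+1] <= 'E_P[ACDE K])%E /\
     (('E_P[ACDE K.+1] < 'E_P[ACDE K])%E <->
        (0 < P [set w | (SE w > muB (aK K w) w)%R /\ (muB (aK K w) w > muB (aK K.+1 w) w)%R])%E
        \/
        (0 < P [set w | (muB (aK K w) w >= SE w)%R /\ (SE w > muB (aK K.+1 w) w)%R])%E)) /\
  (forall K, (1 <= K <= N)%N -> ('E_P[CDE] <= 'E_P[ACDE K])%E).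

Proof.
move=> N2 _ hXint _ hsame minA _ _ mu muA muB.
pose G w := \sum_(i < N) \sum_(j < n i) `|Y i j w|.
have bG i w : \sum_(j < n i) `|Y i j w| <= G w.
  rewrite /G (bigD1 i) //= lerDl; apply: sumr_ge0 => k _; apply: sumr_ge0 => j _.
  exact: normr_ge0.
have mY i j : measurable_fun setT (Y i j) by exact: measurable_funP.
apply: (@main_abs d T R P N muA muB mu G aK astar).
- exact: leq_trans N2.
- move=> i; rewrite /muA; apply: msample => // j; exact: minA.
- move=> i; rewrite /muB; apply: msample => // j.
  rewrite (_ : [set w | ~~ inA i j w] = ~` [set w | inA i j w]).
    exact/measurableC/minA.
  by apply/seteqP; split => w /=; case: (inA i j w).
- move=> i; rewrite /mu; apply: (@msample _ _ _ _ (fun _ _ => true)) => // j.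
  by rewrite (_ : [set w | true] = setT) //; apply/seteqP; split.
- apply: intR_sum => i; apply: intR_sum => j; apply: intR_abs.
  apply: int_same (hsame i j (ltn_ord j)) (hXint i).
- move=> i w; apply: le_trans (bG i w); exact: sample_bound.
- move=> i w; apply: le_trans (bG i w); exact: sample_bound.
Qed.
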